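(* For every prime power $q$, $M_q\!\left(\frac{q-1}{q+1}\right)<\frac{1}{q+1}$.
   Context: $H_q(x)=x\log_q(q-1)-x\log_q x-(1-x)\log_q(1-x)$ is the $q$-ary entropy and $M_q(\delta)=H_q\!\left(\frac1q\left(q-1-(q-2)\delta-2\sqrt{(q-1)\delta(1-\delta)}\right)\right)$. *)

(* Defs.v *)
From Stdlib Require Import Reals ZArith Znumtheory.
Open Scope R_scope.

Definition logb (q x : R) : R := ln x / ln q.

Definition Hq (q x : R) : R :=
  x * logb q (q - 1) - x * logb q x - (1 - x) * logb q (1 - x).

Definition Mq (q d : R) : R :=
  Hq q ((q - 1 - (q - 2) * d - 2 * sqrt ((q - 1) * d * (1 - d))) / q).

Definition prime_power (q : nat) : Prop :=
  exists p k : nat, prime (Z.of_nat p) /\ (1 <= k)%nat /\ q = (p ^ k)%nat.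

(* Main.v *)
Require Import Defs.
From Stdlib Require Import Reals ZArith Znumtheory Lra Lia Psatz.
Open Scope R_scope.

Lemma ln_le_sub1 y : 0 < y -> ln y <= y - 1.
Proof. intro H. pose proof (exp_ineq1_le (ln y)). rewrite exp_ln in H0; lra. Qed.

Lemma ln_ge_1minv y : 0 < y -> 1 - / y <= ln y.
Proof.
  intro H. pose proof (ln_le_sub1 (/ y) (Rinv_0_lt_compat _ H)).
  rewrite ln_Rinv in H0 by lra. lra.
Qed.

Lemma ln_le x y : 0 < x -> x <= y -> ln x <= ln y.
Proof. intros H1 [H2|H2]. left; apply ln_increasing; auto. subst; lra. Qed.

Lemma pp_ge2 q : prime_power q -> (2 <= q)%nat.
Proof.
  intros [p [k [Hp [Hk ->]]]].
  destruct Hp as [Hp _].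
  assert (2 <= p)%nat by lia.
  destruct k as [|k]; [lia|]. simpl.
  assert (1 <= p ^ k)%nat by (clear -H; induction k; simpl; lia).
  nia.
Qed.

Lemma main_real (Q : R) (HQ : 2 <= Q) (Hcase : Q = 2 \/ 3 <= Q) :
  Mq Q ((Q - 1) / (Q + 1)) < 1 / (Q + 1).
Proof.
  set (sq := sqrt 2).
  assert (Hs2 : sq * sq = 2) by (apply sqrt_sqrt; lra).
  assert (Hs0 : 0 < sq) by (apply sqrt_lt_R0; lra).
  assert (Hsl : 1414/1000 < sq) by nra.
  assert (Hsu : sq < 17/12) by nra.
  set (a := (Q - 1) / (Q + 1)).
  assert (Ha : 0 <= a) by (unfold a; unfold Rdiv; apply Rmult_le_pos; [lra | left; apply Rinv_0_lt_compat; lra]).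
  assert (Hsq : sqrt ((Q - 1) * a * (1 - a)) = sq * a).
  { replace ((Q - 1) * a * (1 - a)) with (2 * (a * a)).
    - rewrite sqrt_mult by nra. rewrite sqrt_square by lra. reflexivity.
    - unfold a. field. lra. }
  unfold Mq. rewrite Hsq.
  set (c := 3 - 2 * sq).
  set (x := (Q - 1 - (Q - 2) * a - 2 * (sq * a)) / Q).
  assert (Hx : x = c * (Q - 1) / (Q * (Q + 1))).
  { unfold x, a, c. field. lra. }
  clearbody x. subst x.
  set (x := c * (Q - 1) / (Q * (Q + 1))).
  assert (Hx0 : 0 < x) by (unfold x, c; apply Rdiv_lt_0_compat; nra).
  assert (HxQ : x * (Q + 1) = c * (Q - 1) / Q) by (unfold x; field; lra).
  assert (Hx1 : x < 1).
  { assert (x * (Q+1) < Q + 1). rewrite HxQ. apply Rmult_lt_reg_r with Q; [lra|].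
    unfold Rdiv. rewrite Rmult_assoc, Rinv_l by lra. unfold c. nra. nra. }
  set (L := ln Q).
  assert (HL : 1/2 < L).
  { unfold L. destruct Hcase as [->|H3]. pose proof ln_lt_2; lra.
    pose proof (ln_ge_1minv Q ltac:(lra)). assert (Q * / Q = 1) by (field; lra). assert (0 < / Q) by (apply Rinv_0_lt_compat; lra). nra. }
  unfold Hq, logb. fold L.
  assert (B1 : ln (Q - 1) <= L).
  { unfold L. apply ln_le; lra. }
  assert (B3 : - ((1 - x) * ln (1 - x)) <= x).
  { pose proof (ln_ge_1minv (1 - x)). assert (0 < 1 - x) by lra.
    assert (- ln (1-x) <= x / (1 - x)).
    { assert (1 - / (1 - x) = - (x / (1 - x))) by (field; lra). lra. }
    assert ((1-x) * (- ln (1-x)) <= (1-x) * (x / (1-x))) by (apply Rmult_le_compat_l; lra).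
    replace ((1-x) * (x / (1-x))) with x in H2 by (field; lra). lra. }
  assert (Hlx : - ln x = ln (/ x)) by (rewrite ln_Rinv; lra).
  assert (HinvX : / x = Q * (Q + 1) / (c * (Q - 1))).
  { unfold x. field. unfold c; repeat split; nra. }
  assert (Hc : 1/6 < c < 172/1000).
  { unfold c. split; lra. }
  assert (Key : x * (L + ln (/ x) + 1) < L / (Q + 1)).
  { destruct Hcase as [E|H3].
    - assert (ln (/ x) <= 6 * L).
      { assert (ln (Q ^ 6) = 6 * L) by (unfold L; rewrite ln_pow by lra; simpl INR; ring).
        rewrite <- H. apply ln_le. apply Rinv_0_lt_compat; lra.
        rewrite HinvX, E.
        replace (2*(2+1)/(c*(2-1))) with (6 * /c) by (field; lra).
        assert (c * /c = 1) by (field; lra). assert (0 < /c) by (apply Rinv_0_lt_compat; lra).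
        simpl. nra. }
      assert (x = c / 6) by (unfold x; rewrite E; field).
      assert (L / (Q+1) = L / 3) by (rewrite E; field).
      rewrite H1, H0.
      assert (c / 6 * (L + ln (/ (c / 6)) + 1) <= c/6 * (7 * L + 1)).
      { apply Rmult_le_compat_l. lra. rewrite <- H0. lra. }
      nra.
    - assert (HL1 : 1 <= L).
      { unfold L. rewrite <- ln_exp with 1. apply ln_le. apply exp_pos.
        pose proof exp_le_3; lra. }
      assert (ln (/ x) <= 3 * L + 1/3).
      { assert (/ x <= 4 * Q * Q).
        { rewrite HinvX. apply Rmult_le_reg_r with (c * (Q - 1)); [nra|].
          unfold Rdiv. rewrite Rmult_assoc, Rinv_l, Rmult_1_r by nra.
          assert (0 <= (c - 1/6) * (Q * (Q - 1))) by (apply Rmult_le_pos; nra).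
          assert (Q + 1 <= 4 * Q * c * (Q - 1)) by nra.
          assert (0 <= Q * (4 * Q * c * (Q - 1) - (Q + 1))) by (apply Rmult_le_pos; lra).
          nra. }
        assert (ln (4 * Q * Q) = ln (4 / Q) + 3 * L).
        { unfold L. replace (4*Q*Q) with ((4/Q)*(Q*(Q*Q))) by (field; lra).
          assert (0 < 4/Q) by (apply Rdiv_lt_0_compat; lra).
          rewrite !ln_mult by nra. ring. }
        assert (ln (4 / Q) <= 1/3).
        { pose proof (ln_le_sub1 (4 / Q)). assert (4 / Q <= 4/3).
          { apply Rmult_le_reg_r with Q; [lra|]. unfold Rdiv. rewrite Rmult_assoc, Rinv_l by lra. nra. }
          assert (0 < 4 / Q) by (apply Rdiv_lt_0_compat; lra). lra. }
        assert (ln (/ x) <= ln (4 * Q * Q)). apply ln_le. apply Rinv_0_lt_compat; lra. lra.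
        lra. }
      apply Rmult_lt_reg_r with (Q + 1); [lra|].
      replace (L / (Q + 1) * (Q + 1)) with L by (field; lra).
      replace (x * (L + ln (/ x) + 1) * (Q + 1)) with (x * (Q+1) * (L + ln (/ x) + 1)) by ring.
      rewrite HxQ.
      assert (0 < c * (Q - 1) / Q < c).
      { split. apply Rdiv_lt_0_compat; nra.
        apply Rmult_lt_reg_r with Q; [lra|]. unfold Rdiv. rewrite Rmult_assoc, Rinv_l by lra. nra. }
      assert (0 < L + ln (/ x) + 1).
      { assert (0 < ln (/ x)). rewrite <- Hlx. assert (ln x < 0). rewrite <- ln_1; apply ln_increasing; lra. lra. lra. }
      nra. }
  assert (HLp : 0 < L) by lra.
  apply Rmult_lt_reg_r with L; [lra|].
  replace ((x * (ln (Q - 1) / L) - x * (ln x / L) - (1 - x) * (ln (1 - x) / L)) * L)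
    with (x * ln (Q - 1) - x * ln x - (1 - x) * ln (1 - x)) by (field; lra).
  replace (1 / (Q + 1) * L) with (L / (Q + 1)) by (field; lra).
  assert (x * ln (Q - 1) <= x * L) by (apply Rmult_le_compat_l; lra).
  nra.
Qed.

Theorem lemmaA1 (q : nat) (hq : prime_power q) :
  Mq (INR q) ((INR q - 1) / (INR q + 1)) < 1 / (INR q + 1).
Proof.
  pose proof (pp_ge2 q hq) as H2.
  apply main_real.
  - apply (le_INR 2 q) in H2. simpl in H2. lra.
  - destruct (Nat.eq_dec q 2) as [->|Hn].
    + left. simpl. ring.
    + right. assert (3 <= q)%nat by lia. apply le_INR in H. simpl in H. lra.
Qed.
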